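(* Let $F$ be a 3-SAT formula over variables $x_1,\dots,x_p$ with clauses $C_1,\dots,C_c$, and $A$ a partial assignment on $x_1,\dots,x_p$. Let $$X = \begin{bmatrix} 0 & 1 & 1\\ E(C_1) & 0 & 1\\ \vdots&\vdots&\vdots\\ E(C_c) & 0 & 1\\ E(A) & 0 & 1\end{bmatrix}\in\mathbb{R}^{(c+2)\times(2p+2)}$$ (the first row has the zero vector in its first $2p$ entries). Then there exist: (i) a saturated attention head with parameters $\Gamma_s^{A\models F}$ and output dimension $1$ such that $\operatorname{SaturatedAttn}(X;\Gamma_s^{A\models F})_{c+2} = \mathbf{1}_{A\models F}$; (ii) a saturated attention head with parameters $\Gamma_s^{F\models\lnot A}$ and output dimension $1$ such that $\operatorname{SaturatedAttn}(X;\Gamma_s^{F\models\lnot A})_{c+2} = \mathbf{1}_{F\models\lnot A}$; (iii) a saturated attention head with parameters $\Gamma_s^{D}$ and output dimension $2p$, and an MLP layer with ReGLU activation and parameters $\Gamma^D_{MLP}$, such that $\operatorname{MLP}\big([\operatorname{SaturatedAttn}(X;\Gamma_s^D);X];\Gamma^D_{MLP}\big)_{c+2} = E(D)$ whenever $F\not\models\lnot A$, where $D=\{\ell\in L\mid F\land A\models_1\ell\}$. The parameters depend only on $p$ and $c$, not on $F$ or $A$.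
   Context: Literals $L = \{x_1,\lnot x_1,\dots,x_p,\lnot x_p\}$; clauses and partial assignments are subsets of $L$ not containing both $x_v$ and $\lnot x_v$; a clause is the disjunction of its literals and a partial assignment sets $x_v$ true if $x_v\in A$, false if $\lnot x_v\in A$. $E(B)\in\{0,1\}^{2p}$ has $E(B)_v = \mathbf{1}_{x_v\in B}$, $E(B)_{v+p} = \mathbf{1}_{\lnot x_v\in B}$. $A\models F$: every clause contains a literal of $A$. $F\models\lnot A$: some clause has all its literals' negations in $A$. $F\land A\models_1\ell$: some clause not satisfied by $A$ becomes exactly $\{\ell\}$ after deleting literals whose negations are in $A$. Saturated masked attention with weights $\Gamma_s=(W_Q,W_K,W_V)$: let $\mathbf{A} = XW_Q(XW_K)^\top$, $\mathcal{M}_i = \{j\le i \mid \mathbf{A}_{ij} = \max_{k\le i}\mathbf{A}_{ik}\}$, and $\operatorname{SaturatedAttn}(X;\Gamma_s)_i = \frac{1}{|\mathcal{M}_i|}\sum_{j\in\mathcal{M}_i} X_jW_V$. An MLP layer with ReGLU activation computes $x\mapsto W_2[(W_1x+b_1)\otimes\operatorname{ReLU}(Vx+b_2)]+b$ at each position; $[\cdot;\cdot]$ denotes rowwise concatenation. *)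

(* Defs.v *)
From HB Require Import structures.
From mathcomp Require Import all_boot all_order all_algebra.
From mathcomp Require Import reals.
Set Implicit Arguments. Unset Strict Implicit. Unset Printing Implicit Defensive.
Import Order.TTheory GRing.Theory Num.Theory.
Local Open Scope ring_scope.

(** Literals over variables x_0..x_{p-1}: (v, true) is x_v, (v, false) is ~ x_v. *)
Definition lit (p : nat) : finType := ('I_p * bool)%type.

Definition lneg {p : nat} (l : lit p) : lit p := (l.1, ~~ l.2).

Definition consistent {p : nat} (B : {set lit p}) : bool :=
  [forall v : 'I_p, ~~ (((v, true) \in B) && ((v, false) \in B))].

Definition is3clause {p : nat} (C : {set lit p}) : bool :=
  consistent C && (#|C| == 3)%N.

Definition sat_clause {p : nat} (A C : {set lit p}) : bool :=
  [exists l in C, l \in A].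

Definition models {p c : nat} (A : {set lit p}) (F : 'I_c -> {set lit p}) : bool :=
  [forall i : 'I_c, sat_clause A (F i)].

Definition entails_notA {p c : nat} (F : 'I_c -> {set lit p}) (A : {set lit p}) : bool :=
  [exists i : 'I_c, [forall l in F i, lneg l \in A]].

Definition unit_entails {p c : nat} (F : 'I_c -> {set lit p}) (A : {set lit p})
  (l : lit p) : bool :=
  [exists i : 'I_c, ~~ sat_clause A (F i) &&
     ([set l' in F i | lneg l' \notin A] == [set l])].

Definition unit_set {p c : nat} (F : 'I_c -> {set lit p}) (A : {set lit p}) : {set lit p} :=
  [set l | unit_entails F A l].

(** Encoding E(B) in {0,1}^{2p}: E(B)_v = [x_v in B], E(B)_{v+p} = [~x_v in B]. *)
Definition enc {R : realType} {p : nat} (B : {set lit p}) : 'rV[R]_(p + p) :=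
  \row_(j < p + p) match split j with
                   | inl v => (((v, true) \in B) : nat)%:R
                   | inr v => (((v, false) \in B) : nat)%:R
                   end.

Definition tokrow {R : realType} {n : nat} (e : 'rV[R]_n) (a b : R) : 'rV[R]_(n + 2) :=
  row_mx e (\row_(k < 2) (if k == 0 :> nat then a else b)).

Definition inputX {R : realType} {p c : nat} (F : 'I_c -> {set lit p})
  (A : {set lit p}) : 'M[R]_(c.+2, p + p + 2) :=
  \matrix_(i < c.+2)
    if (i == 0 :> nat) then tokrow 0 1 1
    else if (insub (i.-1) : option 'I_c) is Some k then tokrow (enc (F k)) 0 1
    else tokrow (enc A) 0 1.

Definition satMask {R : realType} {n : nat} (Att : 'M[R]_n) (i : 'I_n) : {set 'I_n} :=
  [set j : 'I_n | (j <= i)%N && [forall k : 'I_n, (k <= i)%N ==> (Att i k <= Att i j)]].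

Definition satAttn {R : realType} {n d dk dv : nat} (X : 'M[R]_(n, d))
  (WQ WK : 'M[R]_(d, dk)) (WV : 'M[R]_(d, dv)) : 'M[R]_(n, dv) :=
  let Att := (X *m WQ) *m (X *m WK)^T in
  \matrix_(i < n) ((#|satMask Att i|%:R)^-1 *:
                   \sum_(j in satMask Att i) (row j X *m WV)).

Definition relu {R : realType} (x : R) : R := Num.max x 0.

Definition regluMLP {R : realType} {n m h o : nat}
  (W1 V : 'M[R]_(m, h)) (b1 b2 : 'rV[R]_h) (W2 : 'M[R]_(h, o)) (b : 'rV[R]_o)
  (Y : 'M[R]_(n, m)) : 'M[R]_(n, o) :=
  \matrix_(i < n)
    (map2_mx (fun x y => x * y) (row i Y *m W1 + b1)
             (map_mx relu (row i Y *m V + b2)) *m W2 + b).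

(* Main.v *)
Require Import Defs.
From HB Require Import structures.
From mathcomp Require Import all_boot all_order all_algebra.
From mathcomp Require Import reals.
From mathcomp Require Import zify lra.
Import Order.TTheory GRing.Theory Num.Theory.
Local Open Scope ring_scope.

Definition litof {p : nat} (j : 'I_(p + p)) : lit p :=
  match split j with inl v => (v, true) | inr v => (v, false) end.

Lemma encE (R : realType) (p : nat) (B : {set lit p}) (j : 'I_(p + p)) :
  (enc B : 'rV[R]_(p + p)) 0 j = (litof j \in B)%:R.
Proof. by rewrite mxE /litof; case: split. Qed.

Lemma sum_litof (R : realType) (p : nat) (f : lit p -> R) :
  \sum_(j < p + p) f (litof j) = \sum_(l : lit p) f l.
Proof.
rewrite big_split_ord /=.
have -> : \sum_(l : lit p) f l = \sum_(v < p) \sum_(b : bool) f (v, b).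
  by rewrite pair_big; apply: eq_bigr => -[v b] _.
rewrite -big_split /=; apply: eq_bigr => v _.
by rewrite big_bool /litof (unsplitK (inl v)) (unsplitK (inr v)).
Qed.

Lemma card_sumR (R : realType) (p : nat) (S : {set lit p}) :
  (#|S|%:R : R) = \sum_(l : lit p) (l \in S)%:R.
Proof.
rewrite -sum1_card natr_sum big_mkcond /=; apply: eq_bigr => l _.
by case: (l \in S).
Qed.

Lemma dot_enc (R : realType) (p : nat) (A B : {set lit p}) :
  ((enc A : 'rV[R]_(p + p)) *m (enc B)^T) 0 0 = #|A :&: B|%:R.
Proof.
rewrite mxE card_sumR.
rewrite (eq_bigr (fun j => (fun l => (l \in A :&: B)%:R) (litof j))).
  by rewrite (sum_litof R p (fun l => (l \in A :&: B)%:R)).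
by move=> j _; rewrite [X in _ * X]mxE !encE inE -natrM mulnb.

Qed.

Definition negs {p : nat} (B : {set lit p}) : {set lit p} := [set l | lneg l \in B].

Definition Sw (R : realType) (p : nat) : 'M[R]_(p + p) :=
  \matrix_(i, j) (litof i == lneg (litof j))%:R.

Lemma lnegK (p : nat) : involutive (@lneg p).
Proof. by case=> v b; rewrite /lneg /= negbK. Qed.

Lemma enc_Sw (R : realType) (p : nat) (B : {set lit p}) :
  (enc B : 'rV[R]_(p + p)) *m Sw R p = enc (negs B).
Proof.
apply/rowP => j; rewrite mxE encE inE.
rewrite (eq_bigr (fun i => (fun l => (l \in B)%:R * (l == lneg (litof j))%:R) (litof i))).
  rewrite (sum_litof R p (fun l => (l \in B)%:R * (l == lneg (litof j))%:R)) (bigD1 (lneg (litof j))) //= eqxx mulr1 big1 ?addr0 //.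
  by move=> l /negbTE ->; rewrite mulr0.
by move=> i _; rewrite encE mxE.
Qed.

Lemma dot_negs (R : realType) (p : nat) (A B : {set lit p}) :
  ((enc A : 'rV[R]_(p + p)) *m (enc (negs B))^T) 0 0 = #|negs A :&: B|%:R.
Proof.
rewrite dot_enc !card_sumR (reindex_inj (inv_inj (@lnegK p))) /=.
by apply: eq_bigr => l _; rewrite !inE lnegK andbC.
Qed.

Lemma sum_enc (R : realType) (p : nat) (B : {set lit p}) :
  ((enc B : 'rV[R]_(p + p)) *m (const_mx 1 : 'M[R]_(p + p, 1))) 0 0 = #|B|%:R.
Proof.
rewrite mxE card_sumR.
rewrite (eq_bigr (fun j => (fun l => (l \in B)%:R) (litof j))).
  by rewrite (sum_litof R p (fun l => (l \in B)%:R)).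
by move=> j _; rewrite [X in _ * X]mxE encE mulr1.
Qed.

Local Close Scope ring_scope.
Local Open Scope ring_scope.

Lemma satMask_max (R : realType) (n : nat) (Att : 'M[R]_n.+1) (j : 'I_n.+1) :
  (j \in satMask Att ord_max) = [forall k, Att ord_max k <= Att ord_max j].
Proof.
rewrite inE leq_ord /=; apply: eq_forallb => k; by rewrite leq_ord.
Qed.

Lemma satAttn_mask_ne (R : realType) (n d dk dv : nat) (X : 'M[R]_(n.+1, d))
  (WQ WK : 'M[R]_(d, dk)) :
  exists j, j \in satMask ((X *m WQ) *m (X *m WK)^T) ord_max.
Proof.
set s := fun j => ((X *m WQ) *m (X *m WK)^T) ord_max j.
have [j _ Hj] := @arg_maxP _ R _ ord0 xpredT s isT.
exists j; rewrite satMask_max; apply/forallP => k; exact: Hj.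
Qed.

Lemma satAttn_const (R : realType) (n d dk dv : nat) (X : 'M[R]_(n.+1, d))
  (WQ WK : 'M[R]_(d, dk)) (WV : 'M[R]_(d, dv)) (th : R) (v : 'rV[R]_dv) :
  (exists j0, th <= ((X *m WQ) *m (X *m WK)^T) ord_max j0) ->
  (forall j, th <= ((X *m WQ) *m (X *m WK)^T) ord_max j -> row j X *m WV = v) ->
  row ord_max (satAttn X WQ WK WV) = v.
Proof.
move=> [j0 Hj0] Hv; rewrite /satAttn rowK /=.
set M := satMask _ _.
have Hs : \sum_(j in M) (row j X *m WV) = \sum_(j in M) v.
  apply: eq_bigr => j; rewrite satMask_max => /forallP H.
  apply: Hv; exact: le_trans Hj0 (H j0).
rewrite Hs sumr_const -scaler_nat scalerA mulVf ?scale1r //.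
have [j Hj] := @satAttn_mask_ne R n d dk dv X WQ WK.
by rewrite pnatr_eq0 -lt0n; apply/card_gt0P; exists j.
Qed.

Lemma Att_entry (R : realType) (n d dk : nat) (X : 'M[R]_(n, d))
  (WQ WK : 'M[R]_(d, dk)) i j :
  ((X *m WQ) *m (X *m WK)^T) i j = ((row i X *m WQ) *m (row j X *m WK)^T) 0 0.
Proof.
rewrite -row_mul -(row_mul j) !mxE; apply: eq_bigr => k _; rewrite !mxE //.
Qed.

Definition Tq (R : realType) : 'M[R]_(2, 1) := \matrix_(i, j) (i == 1 :> nat)%:R.
Definition WQ0 (R : realType) (p : nat) : 'M[R]_(p + p + 2, p + p + 1) :=
  block_mx 1%:M 0 0 (Tq R).

Lemma score_eq (R : realType) (p : nat) (e eA : 'rV[R]_(p + p)) (a : R)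
  (KE : 'M[R]_(p + p)) (Ke : 'M[R]_(p + p, 1)) (Tk : 'M[R]_(2, 1)) :
  ((tokrow eA 0 1 *m WQ0 R p) *m (tokrow e a 1 *m block_mx KE Ke 0 Tk)^T) 0 0
  = (eA *m (e *m KE)^T) 0 0 + (e *m Ke) 0 0 + a * Tk 0 0 + Tk 1 0.
Proof.
rewrite /tokrow /WQ0 !mul_row_block !mulmx0 !addr0 !add0r mulmx1 tr_row_mx mul_row_col.
rewrite mxE -!addrA; congr (_ + _).
rewrite !mxE big_ord1 !mxE !big_ord_recl !big_ord0 !mxE /=.
rewrite !mul0r !mul1r !add0r !addr0 mul1r; congr (_ + (_ + Tk _ _)); exact: val_inj.
Qed.

Local Close Scope ring_scope.
Local Open Scope ring_scope.

Definition Bset {p c : nat} (F : 'I_c -> {set lit p}) (A : {set lit p}) (j : 'I_c.+2)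
  : {set lit p} :=
  if j == 0 :> nat then set0 else if (insub j.-1 : option 'I_c) is Some k then F k else A.

Lemma enc0 (R : realType) (p : nat) : (enc set0 : 'rV[R]_(p + p)) = 0.
Proof. by apply/rowP => j; rewrite encE inE !mxE. Qed.

Lemma row_inputX (R : realType) (p c : nat) (F : 'I_c -> {set lit p}) A j :
  row j (inputX F A : 'M[R]_(c.+2, p + p + 2))
  = tokrow (enc (Bset F A j)) (if j == 0 :> nat then 1 else 0) 1.
Proof.
rewrite rowK /Bset; case: (j == 0 :> nat) => /=; first by rewrite enc0.
by case: insub.
Qed.

Lemma Bset_last (p c : nat) (F : 'I_c -> {set lit p}) A :
  Bset F A ord_max = A.
Proof.
rewrite /Bset /=; case: insubP => //= k; by rewrite ltnn.
Qed.

Lemma Bset_0 (p c : nat) (F : 'I_c -> {set lit p}) A : Bset F A ord0 = set0.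
Proof. by []. Qed.

Lemma Bset_cases (p c : nat) (F : 'I_c -> {set lit p}) A (j : 'I_c.+2) :
  (j == 0 :> nat) = false -> (exists k, Bset F A j = F k) \/ Bset F A j = A.
Proof.
rewrite /Bset => ->; case: insub => [k|]; by [left; exists k | right].
Qed.

Lemma Bset_clause (p c : nat) (F : 'I_c -> {set lit p}) A (k : 'I_c) :
  exists j : 'I_c.+2, (j == 0 :> nat) = false /\ Bset F A j = F k.
Proof.
exists (Ordinal (leqW (ltn_ord k) : (k.+1 < c.+2)%N)); split => //.
rewrite /Bset /=; case: insubP => [k' _ /= Hk'|]; last by rewrite ltn_ord.
by congr F; apply: val_inj.
Qed.

Definition Tk (R : realType) (x : R) : 'M[R]_(2, 1) :=
  \matrix_(i, j) (if i == 0 :> nat then x else 0).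

Lemma score_X (R : realType) (p c : nat) (F : 'I_c -> {set lit p}) A
  (KE : 'M[R]_(p + p)) (Ke : 'M[R]_(p + p, 1)) (x : R) (j : 'I_c.+2) :
  let X := (inputX F A : 'M[R]_(c.+2, p + p + 2)) in
  ((X *m WQ0 R p) *m (X *m block_mx KE Ke 0 (Tk R x))^T) ord_max j
  = (enc A *m (enc (Bset F A j) *m KE)^T) 0 0 + (enc (Bset F A j) *m Ke) 0 0
    + (if j == 0 :> nat then 1 else 0) * x.
Proof.
move=> X; rewrite Att_entry /X !row_inputX Bset_last /=.
rewrite score_eq !mxE /= addr0.
by case: (j == 0 :> nat).
Qed.

Lemma val_X (R : realType) (p c dv : nat) (F : 'I_c -> {set lit p}) A
  (Ve : 'M[R]_(p + p, dv)) (Vt : 'M[R]_(2, dv)) (j : 'I_c.+2) :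
  row j (inputX F A : 'M[R]_(c.+2, p + p + 2)) *m col_mx Ve Vt
  = enc (Bset F A j) *m Ve + \row_k ((if j == 0 :> nat then 1 else 0) * Vt 0 k + Vt 1 k).
Proof.
rewrite row_inputX /tokrow mul_row_col; congr (_ + _).
apply/rowP => k; rewrite !mxE !big_ord_recl big_ord0 !mxE /= addr0 mul1r.
by congr (_ + Vt _ _); apply: val_inj.
Qed.

Lemma ler_natB (R : realType) (n x y : nat) :
  ((n%:R : R) <= x%:R - y%:R) = (n + y <= x)%N.
Proof. by rewrite lerBrDr -natrD ler_nat. Qed.

Lemma ler_natBB (R : realType) (a b x y : nat) :
  ((a%:R : R) - b%:R <= x%:R - y%:R) = (a + y <= x + b)%N.
Proof. by rewrite lerBrDr addrAC lerBlDr -!natrD ler_nat. Qed.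

Local Close Scope ring_scope.

Lemma cons_neg (p : nat) (A : {set lit p}) (l : lit p) :
  consistent A -> l \in A -> lneg l \notin A.
Proof.
move=> /forallP /(_ l.1); case: l => v [] /= H Hl; apply/negP => Hn;
  by move: H; rewrite Hl Hn.
Qed.
Arguments cons_neg {p A l}.

Lemma negsAA (p : nat) (A : {set lit p}) : consistent A -> #|negs A :&: A| = 0.
Proof.
move=> cA; apply/eqP; rewrite cards_eq0; apply/eqP/setP => l; rewrite !inE.
by apply/negP => /andP [H1 H2]; move: (cons_neg cA H2); rewrite H1.
Qed.

Lemma card3 (p : nat) (C : {set lit p}) : is3clause C -> #|C| = 3.
Proof. by case/andP => _ /eqP. Qed.

Lemma IN_le (p : nat) (A C : {set lit p}) : consistent A -> is3clause C ->
  #|A :&: C| + #|negs A :&: C| <= 3.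
Proof.
move=> cA /card3 <-.
have Hd : (A :&: C) :&: (negs A :&: C) = set0.
  apply/setP => l; rewrite !inE.
  by apply/negP => /and3P [/andP [H1 _] H2 _]; move: (cons_neg cA H1); rewrite H2.
rewrite -(cardsUI (A :&: C) (negs A :&: C)) Hd cards0 addn0; apply: subset_leq_card.
by apply/subsetP => l; rewrite !inE => /orP [] /andP [].
Qed.

Lemma sat_I (p : nat) (A C : {set lit p}) : sat_clause A C = (0 < #|A :&: C|).
Proof.
apply/existsP/card_gt0P => [[l /andP [H1 H2]]|[l]].
  by exists l; rewrite inE H1 H2.
by rewrite inE => /andP [H1 H2]; exists l; rewrite H1 H2.
Qed.

Lemma unit_card (p : nat) (A C : {set lit p}) : is3clause C ->
  #|[set l' in C | lneg l' \notin A]| = 3 - #|negs A :&: C|.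
Proof.
move=> /card3 <-.
have -> : [set l' in C | lneg l' \notin A] = C :\: negs A.
  by apply/setP => l; rewrite !inE andbC.
by rewrite cardsD setIC.
Qed.

Lemma fals_N (p : nat) (A C : {set lit p}) : is3clause C ->
  [forall (l | l \in C), lneg l \in A] = (#|negs A :&: C| == 3).
Proof.
move=> /card3 <-.
rewrite (subset_leqif_cards (subsetIr (negs A) C)).
apply/forallP/eqP => [H|H].
  apply/setP => l; rewrite !inE; apply/andP/idP => [[]//|Hl]; split=> //.
  by move: (H l); rewrite Hl.
by move=> l; apply/implyP => Hl; move: Hl; rewrite -{1}H !inE => /andP [].
Qed.

Local Open Scope ring_scope.

Lemma row_entry (R : Type) (m n : nat) (M : 'M[R]_(m, n)) i j : M i j = row i M 0 j.
Proof. by rewrite mxE. Qed.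

Definition WK1 (R : realType) (p : nat) : 'M[R]_(p + p + 2, p + p + 1) :=
  block_mx ((-4)%:M) (const_mx 1) 0 (Tk R 2).

Lemma score1 (R : realType) (p c : nat) (F : 'I_c -> {set lit p}) A (j : 'I_c.+2) :
  (((inputX F A : 'M[R]_(c.+2, p + p + 2)) *m WQ0 R p) *m (inputX F A *m WK1 R p)^T) ord_max j
  = (#|Bset F A j| + (if j == 0 :> nat then 2 else 0))%N%:R - (4 * #|A :&: Bset F A j|)%N%:R.
Proof.
rewrite /WK1 score_X mul_mx_scalar linearZ /= -scalemxAr mxE dot_enc sum_enc.
rewrite natrD natrM; case: (j == 0 :> nat); rewrite /=; lra.
Qed.

Definition WV1 (R : realType) (p : nat) : 'M[R]_(p + p + 2, 1) := col_mx 0 (Tk R 1).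

Lemma val1 (R : realType) (p c : nat) (F : 'I_c -> {set lit p}) A (j : 'I_c.+2) :
  row j (inputX F A : 'M[R]_(c.+2, p + p + 2)) *m WV1 R p
  = \row_(k < 1) (if j == 0 :> nat then 1 else 0).
Proof.
rewrite /WV1 val_X mulmx0 add0r; apply/rowP => k; rewrite !mxE /=.
by case: (j == 0 :> nat); rewrite ?mul1r ?mul0r addr0.
Qed.

Arguments score1 {R p c}.
Arguments card3 {p C}.
Arguments IN_le {p A C}.
Arguments unit_card {p A C}.
Arguments fals_N {p A C}.
Arguments negsAA {p A}.
Arguments val1 {R p c}.
Arguments Bset_cases {p c} F A {j}.
Arguments Bset_clause {p c}.

Lemma part1 (R : realType) (p c : nat) :
  exists (dk : nat) (WQ WK : 'M[R]_(p + p + 2, dk)) (WV : 'M[R]_(p + p + 2, 1)),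
     forall (F : 'I_c -> {set lit p}) (A : {set lit p}),
       (forall k, is3clause (F k)) -> consistent A ->
       satAttn (inputX F A) WQ WK WV ord_max 0 = (models A F : nat)%:R.
Proof.
exists (p + p + 1), (WQ0 R p), (WK1 R p), (WV1 R p) => F A HF cA.
rewrite (@row_entry _ _ _ (satAttn _ _ _ _)).
suff -> : row ord_max (satAttn (inputX F A) (WQ0 R p) (WK1 R p) (WV1 R p))
          = \row_(k < 1) (models A F : nat)%:R.
  by rewrite mxE.
have s0 := @score1 R p c F A ord0; rewrite Bset_0 cards0 setI0 cards0 /= in s0.
case: (boolP (models A F)) => HM.
  apply: (@satAttn_const _ _ _ _ _ _ _ _ _ 2%:R).
    by exists ord0; rewrite s0 subr0.
  move=> j; rewrite score1 ler_natB val1.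
  case E: (j == 0 :> nat) => //; rewrite addn0 => Hj.
  case: (Bset_cases F A E) => [[k Ek]|Ek]; rewrite Ek in Hj.
    move/forallP: HM => /(_ k); rewrite sat_I (card3 (HF k)) in Hj * => HI; lia.
  by move: Hj; rewrite setIid; lia.
apply: (@satAttn_const _ _ _ _ _ _ _ _ _ 3%:R).
  move: HM => /forallPn [k Hk]; have [j [Ej Bj]] := Bset_clause F A k.
  exists j; rewrite score1 ler_natB Ej Bj addn0 (card3 (HF k)).
  by move: Hk; rewrite sat_I -leqNgt leqn0 => /eqP ->.
move=> j; rewrite score1 ler_natB val1.
by case E: (j == 0 :> nat); rewrite /= ?cards0 ?setI0 ?cards0 //; move: E => /eqP E; rewrite (_ : j = ord0) ?Bset_0 ?setI0 ?cards0 //; apply: val_inj.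
Qed.

Local Close Scope ring_scope.
Local Open Scope ring_scope.

Definition WK2 (R : realType) (p : nat) : 'M[R]_(p + p + 2, p + p + 1) :=
  block_mx (2 *: Sw R p) 0 0 (Tk R 5).

Lemma score2 (R : realType) (p c : nat) (F : 'I_c -> {set lit p}) A (j : 'I_c.+2) :
  (((inputX F A : 'M[R]_(c.+2, p + p + 2)) *m WQ0 R p) *m (inputX F A *m WK2 R p)^T) ord_max j
  = (2 * #|negs A :&: Bset F A j| + (if j == 0 :> nat then 5 else 0))%N%:R.
Proof.
rewrite /WK2 score_X mulmx0 -scalemxAr linearZ /= -scalemxAr [((_ *: _) : 'M_1) 0 0]mxE enc_Sw dot_negs mxE addr0.
rewrite natrD natrM; case: (j == 0 :> nat); rewrite /=; lra.
Qed.

Definition Tv2 (R : realType) : 'M[R]_(2, 1) :=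
  \matrix_(i, j) (if i == 0 :> nat then -1 else 1).
Definition WV2 (R : realType) (p : nat) : 'M[R]_(p + p + 2, 1) := col_mx 0 (Tv2 R).

Lemma val2 (R : realType) (p c : nat) (F : 'I_c -> {set lit p}) A (j : 'I_c.+2) :
  row j (inputX F A : 'M[R]_(c.+2, p + p + 2)) *m WV2 R p
  = \row_(k < 1) (if j == 0 :> nat then 0 else 1).
Proof.
rewrite /WV2 val_X mulmx0 add0r; apply/rowP => k; rewrite !mxE /=.
by case: (j == 0 :> nat); rewrite ?mul1r ?mul0r ?add0r // addrC subrr.
Qed.

Arguments score2 {R p c}.
Arguments val2 {R p c}.

Lemma part2 (R : realType) (p c : nat) :
  exists (dk : nat) (WQ WK : 'M[R]_(p + p + 2, dk)) (WV : 'M[R]_(p + p + 2, 1)),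
     forall (F : 'I_c -> {set lit p}) (A : {set lit p}),
       (forall k, is3clause (F k)) -> consistent A ->
       satAttn (inputX F A) WQ WK WV ord_max 0 = (entails_notA F A : nat)%:R.
Proof.
exists (p + p + 1), (WQ0 R p), (WK2 R p), (WV2 R p) => F A HF cA.
rewrite (@row_entry _ _ _ (satAttn _ _ _ _)).
suff -> : row ord_max (satAttn (inputX F A) (WQ0 R p) (WK2 R p) (WV2 R p))
          = \row_(k < 1) (entails_notA F A : nat)%:R.
  by rewrite mxE.
have s0 := @score2 R p c F A ord0; rewrite Bset_0 setI0 cards0 /= in s0.
case: (boolP (entails_notA F A)) => HM.
  apply: (@satAttn_const _ _ _ _ _ _ _ _ _ 6%:R).
    move: HM => /existsP [k Hk]; have [j [Ej Bj]] := Bset_clause F A k.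
    exists j; rewrite score2 ler_nat Ej Bj addn0.
    by move: Hk; rewrite (fals_N (HF k)) => /eqP ->.
  move=> j; rewrite score2 ler_nat val2.
  case E: (j == 0 :> nat) => //.
  move: E => /eqP E; rewrite (_ : j = ord0) ?Bset_0 ?setI0 ?cards0 //; by apply: val_inj.
apply: (@satAttn_const _ _ _ _ _ _ _ _ _ 5%:R).
  by exists ord0; rewrite s0.
move=> j; rewrite score2 ler_nat val2.
case E: (j == 0 :> nat) => //; rewrite addn0 => Hj.
case: (Bset_cases F A E) => [[k Ek]|Ek]; rewrite Ek in Hj.
  move/existsPn: HM => /(_ k); rewrite (fals_N (HF k)) => HN.
  have := IN_le cA (HF k); lia.
by move: Hj; rewrite (negsAA cA).
Qed.

Local Close Scope ring_scope.
Local Open Scope ring_scope.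

Definition WK3 (R : realType) (p : nat) : 'M[R]_(p + p + 2, p + p + 1) :=
  block_mx ((-4)%:M + 2 *: Sw R p) 0 0 (Tk R 3).

Lemma score3 (R : realType) (p c : nat) (F : 'I_c -> {set lit p}) A (j : 'I_c.+2) :
  (((inputX F A : 'M[R]_(c.+2, p + p + 2)) *m WQ0 R p) *m (inputX F A *m WK3 R p)^T) ord_max j
  = (2 * #|negs A :&: Bset F A j| + (if j == 0 :> nat then 3 else 0))%N%:R
    - (4 * #|A :&: Bset F A j|)%N%:R.
Proof.
rewrite /WK3 score_X mulmx0 mulmxDr linearD /= mulmxDr mul_mx_scalar -scalemxAr.
rewrite linearZ /= -scalemxAr linearZ /= -scalemxAr [((_ + _) : 'M_1) 0 0]mxE.
rewrite [((_ *: _) : 'M_1) 0 0]mxE [((_ *: _) : 'M_1) 0 0]mxE enc_Sw dot_negs dot_enc mxE addr0.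
rewrite natrD !natrM; case: (j == 0 :> nat); rewrite /=; lra.
Qed.

Definition WV3 (R : realType) (p : nat) : 'M[R]_(p + p + 2, p + p) := col_mx 1%:M 0.

Lemma val3 (R : realType) (p c : nat) (F : 'I_c -> {set lit p}) A (j : 'I_c.+2) :
  row j (inputX F A : 'M[R]_(c.+2, p + p + 2)) *m WV3 R p = enc (Bset F A j).
Proof.
have := @row_inputX R p c F A j. move=> H. rewrite H.
by rewrite /WV3 /tokrow mul_row_col mulmx1 mulmx0 addr0.
Qed.

Arguments score3 {R p c}.
Arguments val3 {R p c}.

Lemma Bset_0' (p c : nat) (F : 'I_c -> {set lit p}) A (j : 'I_c.+2) :
  (j == 0 :> nat) -> Bset F A j = set0.
Proof. by rewrite /Bset => ->. Qed.
Arguments Bset_0' {p c F A j}.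

Definition ucl {p c : nat} (F : 'I_c -> {set lit p}) (A : {set lit p}) (k : 'I_c) : bool :=
  ~~ sat_clause A (F k) && (#|[set l' in F k | lneg l' \notin A]| == 1)%N.

Lemma ucl_IN (p c : nat) (F : 'I_c -> {set lit p}) A k :
  (forall k, is3clause (F k)) -> consistent A ->
  ucl F A k = (#|A :&: F k| == 0)%N && (#|negs A :&: F k| == 2)%N.
Proof.
move=> HF cA; rewrite /ucl sat_I (unit_card (HF k)).
have := IN_le cA (HF k).
case: (#|A :&: F k|) => [|i]; case: (#|negs A :&: F k|) => [|[|[|[|n]]]] //=.
Qed.

Lemma mask3 (R : realType) (p c : nat) (F : 'I_c -> {set lit p}) A :
  (forall k, is3clause (F k)) -> consistent A -> ~~ entails_notA F A ->
  let M := satMask (((inputX F A : 'M[R]_(c.+2, p + p + 2)) *m WQ0 R p)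
                    *m (inputX F A *m WK3 R p)^T) ord_max in
  (forall j, j \in M -> (j == 0 :> nat) \/ exists k, Bset F A j = F k /\ ucl F A k) /\
  (forall k, ucl F A k -> exists2 j, j \in M & Bset F A j = F k).
Proof.
move=> HF cA HE M.
have Hn k : (#|negs A :&: F k| != 3)%N.
  by move/existsPn: HE => /(_ k); rewrite (fals_N (HF k)).
split.
  move=> j; rewrite satMask_max => /forallP /(_ ord0).
  rewrite !score3 ler_natBB Bset_0 !setI0 !cards0 /= => Hj.
  case E: (j == 0 :> nat); first by left.
  rewrite E in Hj.
  case: (Bset_cases F A E) => [[k Ek]|Ek]; rewrite Ek in Hj.
    right; exists k; split => //; rewrite ucl_IN //.
    have := IN_le cA (HF k); have := Hn k; move=> /eqP H1 H2; set I := #|A :&: F k| in Hj H2 *; set N := #|negs A :&: F k| in Hj H1 H2 *; apply/andP; split; apply/eqP; lia.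
  by move: Hj; rewrite (negsAA cA) setIid; lia.
move=> k; rewrite ucl_IN // => /andP [/eqP HI /eqP HN].
have [j [Ej Bj]] := Bset_clause F A k.
exists j => //; rewrite satMask_max; apply/forallP => j'.
rewrite !score3 ler_natBB Ej Bj HI HN /=.
case E: (j' == 0 :> nat); first by rewrite (Bset_0' E) !setI0 !cards0.
case: (Bset_cases F A E) => [[k' Ek]|Ek]; rewrite Ek.
  have := IN_le cA (HF k'); have := Hn k'; move=> /eqP H1 H2; set I := #|A :&: F k'| in H2 *; set N := #|negs A :&: F k'| in H1 H2 *; lia.
by rewrite (negsAA cA).
Qed.

Local Close Scope ring_scope.
Local Open Scope ring_scope.

Definition W1m (R : realType) (p : nat) : 'M[R]_(p + p + (p + p + 2), (p + p) + (p + p)) :=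
  col_mx 0 (col_mx (row_mx (- Sw R p) (- Sw R p)) 0).
Definition b1m (R : realType) (p : nat) : 'rV[R]_((p + p) + (p + p)) :=
  row_mx (const_mx 1) (const_mx 1).
Definition Vm (R : realType) (p : nat) (K : R) : 'M[R]_(p + p + (p + p + 2), (p + p) + (p + p)) :=
  col_mx (row_mx K%:M K%:M) 0.
Definition b2m (R : realType) (p : nat) : 'rV[R]_((p + p) + (p + p)) :=
  row_mx 0 (const_mx (-1)).
Definition W2m (R : realType) (p : nat) : 'M[R]_((p + p) + (p + p), p + p) :=
  col_mx 1%:M ((-1)%:M).

Lemma mlp_row (R : realType) (p : nat) (K : R) (o eA : 'rV[R]_(p + p)) :
  map2_mx (fun x y => x * y) (row_mx o (tokrow eA 0 1) *m W1m R p + b1m R p)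
     (map_mx relu (row_mx o (tokrow eA 0 1) *m Vm R p K + b2m R p)) *m W2m R p + 0
  = \row_l ((1 - (eA *m Sw R p) 0 l) * relu (K * o 0 l)
            - (1 - (eA *m Sw R p) 0 l) * relu (K * o 0 l - 1)).
Proof.
rewrite /W1m /b1m /Vm /b2m /W2m /tokrow !mul_row_col !mulmx0 !add0r !addr0.
rewrite !mul_mx_row !add_row_mx map_row_mx map2_row_mx.
rewrite mul_row_col !mul_mx_scalar scale1r scaleN1r mulmxN.
by apply/rowP => l; rewrite !mxE addr0 (addrC (- _) 1).
Qed.

Local Close Scope ring_scope.
Local Open Scope ring_scope.

Lemma sum_ind (R : realType) (T : finType) (M : {set T}) (P : pred T) :
  \sum_(j in M) ((P j : nat)%:R : R) = #|[set j in M | P j]|%:R.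
Proof.
rewrite -sum1_card natr_sum [RHS]big_mkcond [LHS]big_mkcond /=.
by apply: eq_bigr => j _; rewrite inE; case: (j \in M); case: (P j).
Qed.

Lemma attn_entry3 (R : realType) (p c : nat) (F : 'I_c -> {set lit p}) A (l : 'I_(p + p)) :
  let M := satMask (((inputX F A : 'M[R]_(c.+2, p + p + 2)) *m WQ0 R p)
                    *m (inputX F A *m WK3 R p)^T) ord_max in
  (row ord_max (satAttn (inputX F A : 'M[R]_(c.+2, p + p + 2)) (WQ0 R p) (WK3 R p) (WV3 R p))) 0 l
  = #|[set j in M | litof l \in Bset F A j]|%:R / #|M|%:R.
Proof.
move=> M; rewrite mxE /satAttn mxE mxE summxE mulrC.
congr (_ * _); rewrite -sum_ind; apply: eq_bigr => j _.
by rewrite val3 encE.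
Qed.

Lemma clamp (R : realType) (K : R) (n m : nat) : (0 < m)%N -> m%:R <= K ->
  relu (K * (n%:R / m%:R)) - relu (K * (n%:R / m%:R) - 1) = ((0 < n)%N : nat)%:R.
Proof.
move=> Hm HK; rewrite /relu.
have Hm' : (0 : R) < m%:R by rewrite ltr0n.
case: n => [|n].
  rewrite mul0r mulr0 add0r.
  have -> : Num.max (0 : R) 0 = 0 by rewrite max_r.
  have -> : Num.max (- 1 : R) 0 = 0 by rewrite max_r //; lra.
  by rewrite subrr.
have H1 : 1 <= K * (n.+1%:R / m%:R).
  rewrite mulrA ler_pdivlMr // mul1r.
  apply: (le_trans HK); rewrite ler_peMr ?ler1n //.
  exact: le_trans (ltW Hm') HK.
rewrite max_l ?max_l /=; first by rewrite opprB addrC subrK.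
  by rewrite subr_ge0.
exact: le_trans ler01 H1.
Qed.

Lemma unit_set_iff (p c : nat) (F : 'I_c -> {set lit p}) A (l : lit p) :
  (l \in unit_set F A) = (lneg l \notin A) && [exists k, ucl F A k && (l \in F k)].
Proof.
rewrite inE /unit_entails; apply/existsP/andP => [[k /andP [Hs /eqP HS]]|[Hn /existsP [k /andP [/andP [Hs /cards1P [x Hx]] Hl]]]].
  have : l \in [set l' in F k | lneg l' \notin A] by rewrite HS set11.
  rewrite inE => /andP [Hl Hn]; split => //; apply/existsP; exists k.
  by rewrite /ucl Hs HS cards1 Hl.
exists k; rewrite Hs /= Hx; apply/eqP; congr [set _].
have : l \in [set l' in F k | lneg l' \notin A] by rewrite inE Hl Hn.
by rewrite Hx inE => /eqP.
Qed.

Local Close Scope ring_scope.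
Local Open Scope ring_scope.

Lemma part3 (R : realType) (p c : nat) :
  (exists (dk : nat) (WQ WK : 'M[R]_(p + p + 2, dk)) (WV : 'M[R]_(p + p + 2, p + p))
          (h : nat) (W1 V : 'M[R]_(p + p + (p + p + 2), h)) (b1 b2 : 'rV[R]_h)
          (W2 : 'M[R]_(h, p + p)) (b : 'rV[R]_(p + p)),
     forall (F : 'I_c -> {set lit p}) (A : {set lit p}),
       (forall k, is3clause (F k)) -> consistent A ->
       ~~ entails_notA F A ->
       row ord_max (regluMLP W1 V b1 b2 W2 b
                      (row_mx (satAttn (inputX F A) WQ WK WV) (inputX F A)))
         = enc (unit_set F A)).
Proof.
exists (p + p + 1), (WQ0 R p), (WK3 R p), (WV3 R p), ((p + p) + (p + p)),
  (W1m R p), (Vm R p (c.+2)%:R), (b1m R p), (b2m R p), (W2m R p), 0.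
move=> F A HF cA HE.
have [HM1 HM2] := @mask3 R p c F A HF cA HE.
rewrite /regluMLP rowK row_row_mx.
have H := @row_inputX R p c F A ord_max; rewrite H Bset_last.
have -> : ((@ord_max c.+1 : nat) == 0) = false by [].
rewrite mlp_row; apply/rowP => l; rewrite mxE encE enc_Sw encE attn_entry3 /=.
set M := satMask _ _ in HM1 HM2 *.
set S := [set j in M | _].
have Hm : (0 < #|M|)%N.
  have [j Hj] := @satAttn_mask_ne R c.+1 (p + p + 2) (p + p + 1) (p + p) (inputX F A) (WQ0 R p) (WK3 R p).
  by apply/card_gt0P; exists j.
have HK : (#|M|%:R : R) <= (c.+2)%:R.
  by rewrite ler_nat; apply: leq_trans (max_card _) _; rewrite card_ord.
rewrite -mulrBr clamp // unit_set_iff inE.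
have -> : (0 < #|S|)%N = [exists k, ucl F A k && (litof l \in F k)].
  apply/card_gt0P/existsP => [[j]|[k /andP [Hk Hl]]].
    rewrite inE => /andP [HjM Hl].
    case: (HM1 j HjM) => [Ej|[k [Ek Hk]]].
      by move: Hl; rewrite (Bset_0' Ej) inE.
    by exists k; rewrite Hk -Ek.
  have [j HjM Ej] := HM2 k Hk.
  by exists j; rewrite inE HjM Ej.
by case: (lneg (litof l) \in A); case: [exists k, _]; rewrite /= ?subrr ?mul0r ?subr0 ?mul1r.
Qed.

Local Close Scope ring_scope.

Local Open Scope ring_scope.

Theorem mainTheorem3 (R : realType) (p c : nat) :
  (* (i) *)
  (exists (dk : nat) (WQ WK : 'M[R]_(p + p + 2, dk)) (WV : 'M[R]_(p + p + 2, 1)),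
     forall (F : 'I_c -> {set lit p}) (A : {set lit p}),
       (forall k, is3clause (F k)) -> consistent A ->
       satAttn (inputX F A) WQ WK WV ord_max 0 = (models A F : nat)%:R) /\
  (* (ii) *)
  (exists (dk : nat) (WQ WK : 'M[R]_(p + p + 2, dk)) (WV : 'M[R]_(p + p + 2, 1)),
     forall (F : 'I_c -> {set lit p}) (A : {set lit p}),
       (forall k, is3clause (F k)) -> consistent A ->
       satAttn (inputX F A) WQ WK WV ord_max 0 = (entails_notA F A : nat)%:R) /\
  (* (iii) *)
  (exists (dk : nat) (WQ WK : 'M[R]_(p + p + 2, dk)) (WV : 'M[R]_(p + p + 2, p + p))
          (h : nat) (W1 V : 'M[R]_(p + p + (p + p + 2), h)) (b1 b2 : 'rV[R]_h)
          (W2 : 'M[R]_(h, p + p)) (b : 'rV[R]_(p + p)),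
     forall (F : 'I_c -> {set lit p}) (A : {set lit p}),
       (forall k, is3clause (F k)) -> consistent A ->
       ~~ entails_notA F A ->
       row ord_max (regluMLP W1 V b1 b2 W2 b
                      (row_mx (satAttn (inputX F A) WQ WK WV) (inputX F A)))
         = enc (unit_set F A)).

Proof.
split; first exact: part1.
split; first exact: part2.
exact: part3.
Qed.
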